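(* Let ${\boldsymbol{k}}=(k_1,\dots,k_r)\in\mathbb{Z}^r$ with $r\ge2$, and suppose $k_i=-k$ for some $i\in\{1,\dots,r\}$ and some integer $k\ge0$. Then in $\widehat{\mathcal{A}}$: (i) If $i=1$, \[\zeta_{\widehat{\mathcal{A}}}({\boldsymbol{k}})=\frac{1}{k+1}\sum_{j=0}^{k+1}\binom{k+1}{j}B_j\Bigl((-1)^j\zeta_{\widehat{\mathcal{A}}}(k_2-k-1+j,k_3,\dots,k_r)-\delta_{j,k+1}\,\zeta_{\widehat{\mathcal{A}}}(k_2,\dots,k_r)\Bigr).\] (ii) If $1<i<r$, \[\zeta_{\widehat{\mathcal{A}}}({\boldsymbol{k}})=\frac{1}{k+1}\sum_{j=0}^{k+1}\binom{k+1}{j}B_j\Bigl((-1)^j\zeta_{\widehat{\mathcal{A}}}({\boldsymbol{k}}^{+}_j)-\zeta_{\widehat{\mathcal{A}}}({\boldsymbol{k}}^{-}_j)\Bigr),\] where ${\boldsymbol{k}}^{+}_j=(k_1,\dots,k_{i-1},k_{i+1}-k-1+j,k_{i+2},\dots,k_r)$ and ${\boldsymbol{k}}^{-}_j=(k_1,\dots,k_{i-2},k_{i-1}-k-1+j,k_{i+1},\dots,k_r)$ (both obtained from ${\boldsymbol{k}}$ by deleting the $i$-th entry and modifying the indicated neighbouring entry). (iii) If $i=r$, \[\zeta_{\widehat{\mathcal{A}}}({\boldsymbol{k}})=\frac{1}{k+1}\sum_{j=0}^{k+1}\binom{k+1}{j}B_j\Bigl((-1)^j\zeta_{\widehat{\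mathcal{A}}}(k_1,\dots,k_{r-1})\,{\boldsymbol{p}}^{k+1-j}-\zeta_{\widehat{\mathcal{A}}}(k_1,\dots,k_{r-2},k_{r-1}-k-1+j)\Bigr).\]
   Context: $B_n$ are the Seki–Bernoulli numbers defined by $ze^z/(e^z-1)=\sum_{n\ge0}B_nz^n/n!$ (so $B_1=1/2$), and $\delta$ is the Kronecker delta. Let $\widehat{\mathcal{A}}=\varprojlim_n\bigl[(\prod_{p}\mathbb{Z}/p^n\mathbb{Z})/(\bigoplus_p\mathbb{Z}/p^n\mathbb{Z})\bigr]$ ($p$ over primes), a $\mathbb{Q}$-algebra. For any integer index ${\boldsymbol{k}}=(k_1,\dots,k_r)$ (entries possibly non-positive) and prime $p$, $\zeta_p({\boldsymbol{k}})=\sum_{0<n_1<\cdots<n_r<p}n_1^{-k_1}\cdots n_r^{-k_r}\in\mathbb{Z}_{(p)}$, and $\zeta_{\widehat{\mathcal{A}}}({\boldsymbol{k}})=\bigl((\zeta_p({\boldsymbol{k}})\bmod p^n)_p\bigr)_n$; for the empty index this value is $1$. ${\boldsymbol{p}}=((p\bmod p^n)_p)_n\in\widehat{\mathcal{A}}$, with ${\boldsymbol{p}}^0=1$. *)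

(* Defs.v *)
From mathcomp Require Import all_boot all_order all_algebra.
Set Implicit Arguments. Unset Strict Implicit. Unset Printing Implicit Defensive.
Import Order.TTheory GRing.Theory Num.Theory.
Local Open Scope ring_scope.

(* Seki-Bernoulli numbers (B_1 = 1/2): from z e^z/(e^z-1) * (e^z-1)/z = e^z,
   sum_{j=0}^{n} C(n+1,j) B_j = n+1 for all n >= 0. *)
Fixpoint bern_list (n : nat) : seq rat :=
  match n with
  | 0%N => [:: 1]
  | n'.+1 =>
      let l := bern_list n' in
      rcons l ((n'.+2%:R - \sum_(j < n'.+1) 'C(n'.+2, j)%:R * nth 0 l j) / n'.+2%:R)
  end.
Definition bernoulli (n : nat) : rat := nth 0 (bern_list n) n.

(* zrev [:: k_r; ...; k_1] m = sum_{0<n_1<...<n_r<m} n_1^{-k_1} ... n_r^{-k_r} *)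
Fixpoint zrev (ks : seq int) (m : nat) : rat :=
  match ks with
  | [::] => 1
  | k :: ks' => \sum_(1 <= n < m) (n%:R : rat) ^ (- k) * zrev ks' n
  end.

Definition zeta_p (p : nat) (ks : seq int) : rat := zrev (rev ks) p.

(* Elements of hat-A are represented by families (x_p)_p of rationals,
   almost all p-integral; (x_p)_p is sent to ((x_p mod p^n)_p)_n. *)
Definition Afam := nat -> rat.

Definition pdiv_rat (p n : nat) (x : rat) : bool :=
  ((p ^ n)%:Z %| numq x)%Z && ~~ ((p%:Z) %| denq x)%Z.

Definition Aeq (x y : Afam) : Prop :=
  forall n : nat, exists N : nat,
    forall p : nat, prime p -> (N <= p)%N -> pdiv_rat p n (x p - y p).

Definition zetaA (ks : seq int) : Afam := fun p => zeta_p p ks.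

(* Main.v *)
Require Import Defs.
From mathcomp Require Import all_boot all_order all_algebra.
Import Order.TTheory GRing.Theory Num.Theory.


From mathcomp Require Import ring zify.
Local Open Scope ring_scope.

Lemma size_bern n : size (bern_list n) = n.+1.
Proof. by elim: n => //= n IH; rewrite size_rcons IH. Qed.

Lemma nth_bern m j : (j <= m)%N -> nth 0 (bern_list m) j = bernoulli j.
Proof.
elim: m j => [|m IH] j hj; first by case: j hj.
rewrite leq_eqVlt in hj; case/orP: hj => [/eqP->|hj]; first by [].
by rewrite /= nth_rcons size_bern hj IH.
Qed.

Lemma bern_rec n : \sum_(j < n.+1) 'C(n.+1, j)%:R * bernoulli j = n.+1%:R.
Proof.
case: n => [|m]; first by rewrite big_ord1 /= /bernoulli /= mul1r.
rewrite big_ord_recr /= binSn.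
have -> : bernoulli m.+1 = (m.+2%:R - \sum_(j < m.+1) 'C(m.+2, j)%:R * bernoulli j) / m.+2%:R.
  rewrite {1}/bernoulli /= nth_rcons size_bern ltnn eqxx; congr (_ / _); congr (_ - _).
  by apply: eq_bigr => j _; rewrite nth_bern // -ltnS.
set S := \sum_(j < m.+1) _.
have h : (m.+2%:R : rat) != 0 by rewrite pnatr_eq0.
by rewrite mulrC divfK // addrC subrK.
Qed.

Lemma bern_sum n : \sum_(j < n.+1) 'C(n, j)%:R * bernoulli j = bernoulli n + n%:R.
Proof.
case: n => [|n]; first by rewrite big_ord1 /= mul1r addr0.
by rewrite big_ord_recr /= bern_rec binn mul1r addrC.
Qed.

Lemma sum_ext (n m : nat) (f : nat -> rat) : (n <= m)%N ->
  (forall l, (n <= l < m)%N -> f l = 0) ->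
  \sum_(l < n) f l = \sum_(l < m) f l.
Proof.
move=> nm H; rewrite -!(big_mkord xpredT) (@big_cat_nat _ _ _ n 0 m) //.
rewrite [X in _ = _ + X]big1_seq ?addr0 // => l /andP[_]; rewrite mem_index_iota.
exact: H.
Qed.

Lemma binC K j l : ('C(K, j) * 'C(K - j, l) = 'C(K, l) * 'C(K - l, j))%N.
Proof.
case: (leqP j K) => hj; last by rewrite (bin_small hj) (@bin_small (K - l) j) ?muln0 //; lia.
case: (leqP l K) => hl; last by rewrite (bin_small hl) (@bin_small (K - j) l) ?muln0 //; lia.
case: (leqP (j + l) K) => h; last first.
  by rewrite (@bin_small (K - j) l) ?(@bin_small (K - l) j) ?muln0 //; lia.
have hp : (0 < j`! * (l`! * (K - j - l)`!))%N by rewrite !muln_gt0 !fact_gt0.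
apply/eqP; rewrite -(eqn_pmul2r hp); apply/eqP.
have e1 := bin_fact hj.
have e2 : (l <= K - j)%N by lia.
have e3 := bin_fact e2.
have e4 := bin_fact hl.
have e5 : (j <= K - l)%N by lia.
have e6 := bin_fact e5.
have e7 : (K - l - j = K - j - l)%N by lia.
rewrite e7 in e6.
transitivity ('C(K, j) * (j`! * ('C(K - j, l) * (l`! * (K - j - l)`!))))%N; first by ring.
rewrite e3 e1 -e4 -e6; ring.
Qed.

Definition G (K : nat) (x : rat) :=
  \sum_(j < K.+1) 'C(K, j)%:R * bernoulli j * x ^+ (K - j).

Lemma G_shift K x : G K (x + 1) =
  \sum_(l < K.+1) x ^+ l * 'C(K, l)%:R * (bernoulli (K - l) + (K - l)%:R).
Proof.
rewrite /G.
under eq_bigr => j _ do rewrite (addrC x 1) exprDn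
   (@big_ord_widen _ _ _ (K - j).+1 K.+1 (fun i => (1 ^+ (K - j - i) * x ^+ i) *+ 'C(K - j, i)) (leq_subr j K)) big_mkcond.
under eq_bigr => j _ do rewrite big_distrr /=.
rewrite exchange_big /=; apply: eq_bigr => l _.
transitivity (\sum_(j < K.+1) x ^+ l * 'C(K, l)%:R * ('C(K - l, j)%:R * bernoulli j)).
  apply: eq_bigr => j _; case: ifP => h.
    rewrite expr1n mul1r mulr_natr; have := binC K j l; move/(congr1 (fun n => n%:R : rat)); rewrite !natrM => E.
    transitivity (x ^+ l * ('C(K, j)%:R * 'C(K - j, l)%:R) * bernoulli j); first ring.
    rewrite E; ring.
  rewrite mulr0 (@bin_small (K - l) j) ?mul0r ?mulr0 //.
  move/negbT: h; move: (ltn_ord l) (ltn_ord j); rewrite ltnS; lia.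
rewrite -big_distrr /= -bern_sum; congr (_ * _).
symmetry; rewrite (@big_ord_widen _ _ _ (K - l).+1 K.+1 (fun j => 'C(K - l, j)%:R * bernoulli j) (leq_subr l K)) big_mkcond /=.
apply: eq_bigr => j _; case: ifP => // h.
by rewrite bin_small ?mul0r //; rewrite ltnS leqNgt in h; rewrite (negbFE h).
Qed.

Lemma G_rev K x : G K x = \sum_(l < K.+1) x ^+ l * 'C(K, l)%:R * bernoulli (K - l).
Proof.
rewrite /G (reindex_inj rev_ord_inj) /=; apply: eq_bigr => l _.
have hl : (l <= K)%N by rewrite -ltnS.
by rewrite subSS bin_sub // subKn // mulrC mulrA.
Qed.

Lemma Gdiff K x : G K (x + 1) - G K x = K%:R * (x + 1) ^+ K.-1.
Proof.
rewrite G_shift G_rev -sumrB.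
under eq_bigr => l _ do rewrite mulrDr addrC addKr.
case: K => [|k]; first by rewrite big_ord1 subnn mulr0 mul0r.
rewrite big_ord_recr /= subnn mulr0 addr0 /= (addrC x 1) exprDn mulr_sumr.
apply: eq_bigr => l _; rewrite expr1n mul1r.
have := mul_bin_down k.+1 l; move/(congr1 (fun n => n%:R : rat)); rewrite !natrM /= => E.
transitivity (x ^+ l * ((k.+1 - l)%:R * 'C(k.+1, l)%:R)); first ring.
rewrite -E mulr_natr; ring.
Qed.

Lemma G0 K : G K 0 = bernoulli K.
Proof.
rewrite /G big_ord_recr /= subnn expr0 mulr1 binn mul1r big1 ?add0r // => j _.
by rewrite expr0n subn_eq0 leqNgt ltn_ord mulr0.
Qed.

Lemma Gm1 K : \sum_(j < K.+1) 'C(K, j)%:R * bernoulli j * (-1) ^+ (K - j)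
   = bernoulli K - (K == 1%N)%:R.
Proof.
have := Gdiff K (-1); rewrite addNr G0 expr0n.
have -> : G K (-1) = \sum_(j < K.+1) 'C(K, j)%:R * bernoulli j * (-1) ^+ (K - j) by [].
set T := \sum_(j < K.+1) _.
move=> E; transitivity (bernoulli K - (bernoulli K - T)); first ring.
rewrite E; congr (_ - _).
by clear; case: K => [|[|k]] //=; rewrite ?mul0r ?mulr1 ?subrr ?mulr0.
Qed.

Lemma bern1 : bernoulli 1 = 2%:R^-1.
Proof.
have := bern_rec 1; rewrite !big_ord_recr big_ord0 /= add0r bin0 bin1 mul1r.
have -> : bernoulli 0 = 1 by [].
move=> E; have h2 : (2%:R : rat) != 0 by [].
apply: (mulfI h2); rewrite divff //; apply: (addrI 1); rewrite E.
by [].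
Qed.

Lemma sign1 j : (-1) ^+ j * (-1) ^+ j = 1 :> rat.
Proof. by rewrite -exprMn mulrNN mulr1 expr1n. Qed.

Lemma bern_sign n : bernoulli n * (-1) ^+ n = bernoulli n - (n == 1%N)%:R.
Proof.
elim/ltn_ind: n => n IH.
case: n IH => [|[|m]] IH.
- by rewrite expr0 mulr1 subr0.
- by rewrite bern1 expr1 mulrN1 /=; apply/eqP.
- set B := bernoulli m.+2; set s : rat := (-1) ^+ m.+2.
  have E1 := Gm1 m.+3; rewrite 2!big_ord_recr /= in E1.
  have E2 := bern_rec m.+2; rewrite big_ord_recr /= in E2.
  set X := \sum_(j < m.+2) 'C(m.+3, j)%:R * bernoulli j.
  set S := \sum_(j < m.+2) 'C(m.+3, j)%:R * ((j : nat) == 1%N)%:R : rat.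
  have HS : S = m.+3%:R.
    rewrite /S !big_ord_recl /= big1 ?addr0 ?mul0r ?mulr1 ?add0r ?bin1 //.
    by move=> i _; rewrite mulr0.
  have E3 : \sum_(j < m.+2) 'C(m.+3, j)%:R * bernoulli j * (-1) ^+ (m.+3 - j)
      = - s * (X - S).
    rewrite /X /S -sumrB mulr_sumr; apply: eq_bigr => j _.
    have hj : (j <= m.+3)%N by apply: leq_trans (ltnW (ltn_ord j)) _.
    rewrite -mulrBr -mulrA -IH; last by apply: leq_trans (ltn_ord j) _.
    have -> : - s = (-1) ^+ (m.+3 - j) * (-1) ^+ j by rewrite -exprD subnK // exprS mulN1r.
    transitivity ('C(m.+3, j)%:R * bernoulli j * (-1) ^+ (m.+3 - j) * ((-1) ^+ j * (-1) ^+ j)).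
      by rewrite sign1 mulr1 mulrA.
    ring.
  rewrite E3 (_ : (m.+3 - m.+2 = 1)%N) ?subnn ?expr0 ?expr1 ?mulr1 ?binn ?binSn ?mul1r ?subr0 in E1; last by lia.
  rewrite binSn in E2.
  have H : m.+3%:R * (B * s - B) = 0.
    transitivity ((- s * (X - S) + m.+3%:R * B * (-1) + bernoulli m.+3 - bernoulli m.+3)
        + s * (X + m.+3%:R * B - S)); first ring.
    by rewrite E1 subrr add0r E2 HS subrr mulr0.
  move/eqP: H; rewrite mulf_eq0 pnatr_eq0 /= subr_eq0 => /eqP ->.
  by rewrite subr0.
Qed.

Lemma Fa kk x : \sum_(j < kk.+2) 'C(kk.+1, j)%:R * bernoulli j * ((-1) ^+ j * x ^+ (kk.+1 - j))
  = G kk.+1 x - kk.+1%:R * x ^+ kk.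
Proof.
rewrite /G.
transitivity (\sum_(j < kk.+2) ('C(kk.+1, j)%:R * bernoulli j * x ^+ (kk.+1 - j)
     - 'C(kk.+1, j)%:R * ((j : nat) == 1%N)%:R * x ^+ (kk.+1 - j))).
  apply: eq_bigr => j _.
  transitivity ('C(kk.+1, j)%:R * (bernoulli j * (-1) ^+ j) * x ^+ (kk.+1 - j)); first ring.
  rewrite bern_sign; ring.
rewrite sumrB; congr (_ - _).
rewrite 2!big_ord_recl /= big1 ?addr0 ?bin1 ?mul0r ?add0r ?mulr1 ?subn1 //.
by move=> i _; rewrite mulr0 mul0r.
Qed.

Definition P kk n := \sum_(1 <= l < n) (l%:R : rat) ^+ kk.

Lemma Gnat kk n : G kk.+1 n%:R = bernoulli kk.+1 + kk.+1%:R * P kk n.+1.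
Proof.
elim: n => [|n IH].
  by rewrite G0 /P big_geq ?mulr0 ?addr0.
have := Gdiff kk.+1 n%:R; rewrite natr1 IH => E.
have -> : G kk.+1 n.+1%:R = (G kk.+1 n.+1%:R - (bernoulli kk.+1 + kk.+1%:R * P kk n.+1))
   + (bernoulli kk.+1 + kk.+1%:R * P kk n.+1) by ring.
rewrite E /P (big_nat_recr n.+1) //=; ring.
Qed.

Lemma PS kk n : (1 <= n)%N -> P kk n.+1 = P kk n + n%:R ^+ kk.
Proof. by move=> h; rewrite /P big_nat_recr. Qed.

Lemma faul1 kk n : (1 <= n)%N ->
  P kk n = (kk.+1%:R)^-1 * \sum_(j < kk.+2) 'C(kk.+1, j)%:R * bernoulli j *
     ((-1) ^+ j * n%:R ^+ (kk.+1 - j) - (j == kk.+1 :> nat)%:R).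
Proof.
move=> hn.
under eq_bigr => j _ do rewrite mulrBr.
rewrite sumrB Fa Gnat PS //.
rewrite big_ord_recr /= eqxx mulr1 binn mul1r big1 ?add0r; last first.
  by move=> i _; rewrite (ltn_eqF (ltn_ord i)) mulr0.
have h : (kk.+1%:R : rat) != 0 by rewrite pnatr_eq0.
set Q := P kk n; set B := bernoulli kk.+1; set y := n%:R ^+ kk.
have -> : B + kk.+1%:R * (Q + y) - kk.+1%:R * y - B = kk.+1%:R * Q by ring.
by rewrite mulKf.
Qed.

Lemma faul2 kk t n : (1 <= t < n)%N ->
  \sum_(t.+1 <= l < n) (l%:R : rat) ^+ kk =
  (kk.+1%:R)^-1 * \sum_(j < kk.+2) 'C(kk.+1, j)%:R * bernoulli j *
     ((-1) ^+ j * n%:R ^+ (kk.+1 - j) - t%:R ^+ (kk.+1 - j)).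
Proof.
move=> /andP[h1 h2].
have -> : \sum_(t.+1 <= l < n) (l%:R : rat) ^+ kk = P kk n - P kk t.+1.
  by rewrite /P (@big_cat_nat _ _ _ t.+1 1 n) //= addrC addrK.
under eq_bigr => j _ do rewrite mulrBr.
rewrite sumrB Fa.
have -> : \sum_(j < kk.+2) 'C(kk.+1, j)%:R * bernoulli j * t%:R ^+ (kk.+1 - j) = G kk.+1 t%:R by [].
rewrite !Gnat (PS kk n) ?(leq_trans h1 (ltnW h2)) //.
set Q := P kk n; set R := P kk t.+1; set B := bernoulli kk.+1; set y := n%:R ^+ kk.
have -> : B + kk.+1%:R * (Q + y) - kk.+1%:R * y - (B + kk.+1%:R * R) = kk.+1%:R * (Q - R) by ring.
by rewrite mulKf // pnatr_eq0.
Qed.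

Lemma tri (f g : nat -> rat) n :
  \sum_(1 <= l < n) f l * \sum_(1 <= t < l) g t =
  \sum_(1 <= t < n) g t * \sum_(t.+1 <= l < n) f l.
Proof.
elim: n => [|n IH]; first by rewrite !big_geq.
case: n IH => [|n] IH; first by rewrite !big_geq.
rewrite big_nat_recr //= IH [RHS]big_nat_recr //= [X in _ = _ + _ * X]big_geq // mulr0 addr0.
rewrite (mulrC (f n.+1)) big_distrl /= -big_split /=; apply: eq_big_nat => t /andP[_ ht].
by rewrite [in RHS](big_nat_recr n.+1) //= mulrDr.
Qed.

Lemma expo (n : nat) (x : int) kk (j : nat) : (1 <= n)%N -> (j <= kk.+1)%N ->
  (n%:R : rat) ^ (- (x - kk%:Z - 1 + j%:Z)) = n%:R ^ (- x) * n%:R ^+ (kk.+1 - j).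
Proof.
move=> hn hj.
have -> : - (x - kk%:Z - 1 + j%:Z) = - x + (kk.+1 - j)%N%:Z by lia.
by rewrite expfzDr // pnatr_eq0 -lt0n.
Qed.

Lemma inner kk a T n : zrev [:: - kk%:Z, a & T] n =
  (kk.+1%:R)^-1 * \sum_(j < kk.+2) 'C(kk.+1, j)%:R * bernoulli j *
    ((-1) ^+ j * (n%:R ^+ (kk.+1 - j) * zrev (a :: T) n)
     - zrev ((a - kk%:Z - 1 + j%:Z) :: T) n).
Proof.
rewrite /=.
rewrite (tri (fun l => (l%:R : rat) ^ (- - kk%:Z)) (fun t => (t%:R : rat) ^ (- a) * zrev T t)).
under eq_bigr => j _ do rewrite !mulr_sumr -sumrB mulr_sumr.
rewrite exchange_big mulr_sumr; apply: eq_big_nat => t /andP[h1 h2].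
have -> : \sum_(t.+1 <= l < n) (l%:R : rat) ^ (- - kk%:Z) = \sum_(t.+1 <= l < n) (l%:R : rat) ^+ kk.
  by apply: eq_bigr => l _; rewrite opprK.
rewrite faul2 ?h1 ?h2 //.
rewrite mulrA (mulrC _ (kk.+1%:R)^-1) -mulrA mulr_sumr; congr (_ * _).
apply: eq_bigr => j _; rewrite expo //; last by rewrite -ltnS.
ring.
Qed.

Lemma lift kk (A : seq int) (X Y : nat -> seq int) (a b : nat -> rat) :
  (forall m, zrev A m = (kk.+1%:R)^-1 * \sum_(j < kk.+2) 'C(kk.+1, j)%:R * bernoulli j *
      (a j * zrev (X j) m - b j * zrev (Y j) m)) ->
  forall Pf m, zrev (Pf ++ A) m = (kk.+1%:R)^-1 * \sum_(j < kk.+2) 'C(kk.+1, j)%:R * bernoulli j *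
      (a j * zrev (Pf ++ X j) m - b j * zrev (Pf ++ Y j) m).
Proof.
move=> H; elim => [|x Pf IH] m; first exact: H.
rewrite /=.
symmetry; under eq_bigr => j _ do rewrite !mulr_sumr -sumrB mulr_sumr.
rewrite exchange_big mulr_sumr; apply: eq_bigr => n _.
symmetry; rewrite IH mulrA (mulrC _ (kk.+1%:R)^-1) -mulrA mulr_sumr; congr (_ * _).
apply: eq_bigr => j _; ring.
Qed.

Lemma base1 kk k2 m : zrev [:: k2; - kk%:Z] m =
  (kk.+1%:R)^-1 * \sum_(j < kk.+2) 'C(kk.+1, j)%:R * bernoulli j *
    ((-1) ^+ j * zrev [:: k2 - kk%:Z - 1 + j%:Z] m - (j == kk.+1 :> nat)%:R * zrev [:: k2] m).
Proof.
rewrite /=.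
symmetry; under eq_bigr => j _ do rewrite !mulr_sumr -sumrB mulr_sumr.
rewrite exchange_big mulr_sumr; apply: eq_big_nat => n /andP[h1 h2].
symmetry.
have -> : \sum_(1 <= l < n) (l%:R : rat) ^ (- - kk%:Z) * 1 = P kk n.
  by apply: eq_bigr => l _; rewrite opprK mulr1.
rewrite faul1 // mulrA (mulrC _ (kk.+1%:R)^-1) -mulrA mulr_sumr; congr (_ * _).
apply: eq_bigr => j _; rewrite expo //; last by rewrite -ltnS.
ring.
Qed.

Lemma base2 kk a b T m : zrev ([:: b; - kk%:Z; a] ++ T) m =
  (kk.+1%:R)^-1 * \sum_(j < kk.+2) 'C(kk.+1, j)%:R * bernoulli j *
    ((-1) ^+ j * zrev ([:: b - kk%:Z - 1 + j%:Z; a] ++ T) m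
     - 1 * zrev ([:: b; a - kk%:Z - 1 + j%:Z] ++ T) m).
Proof.
rewrite /= -/(zrev [:: - kk%:Z, a & T]).
symmetry; under eq_bigr => j _ do rewrite !mulr_sumr -sumrB mulr_sumr.
rewrite exchange_big mulr_sumr; apply: eq_big_nat => n /andP[h1 h2].
symmetry.
have := inner kk a T n; rewrite /= => ->.
rewrite mulrA (mulrC _ (kk.+1%:R)^-1) -mulrA mulr_sumr; congr (_ * _).
apply: eq_bigr => j _; rewrite expo //; last by rewrite -ltnS.
rewrite /=; ring.
Qed.

Lemma Aeq_eq (x y : Afam) : (forall p, x p = y p) -> Aeq x y.
Proof.
move=> H n; exists 0%N => p pp _; rewrite /pdiv_rat H subrr (_ : numq 0 = 0) // (_ : denq 0 = 1) // dvdz0 /=.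
by rewrite dvdzE /= dvdn1; case: p pp => [|[|p]].
Qed.

Lemma take1 (L s : seq int) a : take (size L).+1 (L ++ a :: s) = L ++ [:: a].
Proof. by elim: L => [|y L IH] /=; rewrite ?take0 ?IH. Qed.
Lemma take0c (L s : seq int) : take (size L) (L ++ s) = L.
Proof. by rewrite take_size_cat. Qed.
Lemma nthc (L s : seq int) a n : nth 0 (L ++ a :: s) (size L + n) = nth 0 (a :: s) n.
Proof. by elim: L => [|y L IH] //=. Qed.
Lemma dropc (L s : seq int) n : drop (size L + n) (L ++ s) = drop n s.
Proof. by elim: L => [|y L IH] //=. Qed.

Lemma nth0c (L s : seq int) a : nth 0 (L ++ a :: s) (size L) = a.
Proof. by elim: L => //= *. Qed.
Lemma nth1c (L s : seq int) a y : nth 0 (L ++ a :: y :: s) (size L).+1 = y.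
Proof. by elim: L => //= *. Qed.
Lemma nth2c (L s : seq int) a y z : nth 0 (L ++ a :: y :: z :: s) (size L).+2 = z.
Proof. by elim: L => //= *. Qed.
Lemma drop2c (L s : seq int) a y : drop (size L).+2 (L ++ a :: y :: s) = s.
Proof. by elim: L => //= *; rewrite drop0. Qed.
Lemma drop3c (L s : seq int) a y z : drop (size L).+3 (L ++ a :: y :: z :: s) = s.
Proof. by elim: L => //= *; rewrite drop0. Qed.

Theorem theorem1p3 (ks : seq int) (i kk : nat) :
  (2 <= size ks)%N -> (1 <= i <= size ks)%N ->
  nth 0 ks i.-1 = - (kk%:Z) ->
  [/\
   (* (i) *)
   i = 1%N ->
     Aeq (zetaA ks)
       (fun p => (kk.+1%:R)^-1 * \sum_(j < kk.+2)
          'C(kk.+1, j)%:R * bernoulli j *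
          ((-1) ^+ j * zeta_p p ((nth 0 ks 1 - kk%:Z - 1 + j%:Z) :: drop 2 ks)
           - (j == kk.+1 :> nat)%:R * zeta_p p (drop 1 ks))),
   (* (ii) *)
   (1 < i < size ks)%N ->
     Aeq (zetaA ks)
       (fun p => (kk.+1%:R)^-1 * \sum_(j < kk.+2)
          'C(kk.+1, j)%:R * bernoulli j *
          ((-1) ^+ j * zeta_p p (take i.-1 ks ++
                         (nth 0 ks i - kk%:Z - 1 + j%:Z) :: drop i.+1 ks)
           - zeta_p p (take (i - 2) ks ++
                         (nth 0 ks (i - 2) - kk%:Z - 1 + j%:Z) :: drop i ks)))
   &
   (* (iii) *)
   i = size ks ->
     Aeq (zetaA ks)
       (fun p => (kk.+1%:R)^-1 * \sum_(j < kk.+2)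
          'C(kk.+1, j)%:R * bernoulli j *
          ((-1) ^+ j * zeta_p p (take (size ks).-1 ks) * (p%:R) ^+ (kk.+1 - j)
           - zeta_p p (take (size ks - 2) ks ++
                         [:: nth 0 ks (size ks - 2) - kk%:Z - 1 + j%:Z])))].
Proof.
move=> hs /andP[hi1 hir] hk; split.
- move=> ei; subst i.
  clear hir; case: ks hs hk => [|k1 [|k2 rest]] //= hs hk; subst k1.
  apply: Aeq_eq => p; rewrite /zetaA /zeta_p.
  have R1 : rev [:: - kk%:Z, k2 & rest] = rev rest ++ [:: k2; - kk%:Z].
    by rewrite !rev_cons -!cats1 -!catA.
  have R2 : forall y, rev (y :: rest) = rev rest ++ [:: y].
    by move=> y; rewrite rev_cons cats1.
  rewrite drop0 R1 !R2; under eq_bigr => j _ do rewrite R2.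
  exact: (@lift kk [:: k2; - kk%:Z] (fun j => [:: k2 - kk%:Z - 1 + j%:Z])
           (fun _ => [:: k2]) (fun j => (-1) ^+ j) (fun j => (j == kk.+1)%:R)
           (base1 kk k2) (rev rest) p).
- move=> /andP[hi2 hi3].
  have hsz : (3 <= size (drop (i - 2) ks))%N by rewrite size_drop; lia.
  have eks := cat_take_drop (i - 2) ks.
  have hL : size (take (i - 2) ks) = (i - 2)%N by rewrite size_takel //; lia.
  move: eks hL hsz.
  case: (drop (i - 2) ks) => [|a [|x [|b R]]] //= eks hL _.
  move: (take (i - 2) ks) eks hL => L eks hL; subst ks.
  have ei : i = (size L).+2 by lia.
  subst i; rewrite /= !subSS subn0 in hk *.
  rewrite nth1c in hk; subst x.
  rewrite take1 nth2c nth0c drop3c drop2c.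
  apply: Aeq_eq => p; rewrite /zetaA /zeta_p.
  have R1 : rev (L ++ [:: a, - kk%:Z, b & R]) = rev R ++ ([:: b; - kk%:Z; a] ++ rev L).
    by rewrite rev_cat !rev_cons -!cats1 -!catA.
  have R2 : forall y, rev ((L ++ [:: a]) ++ y :: R) = rev R ++ ([:: y; a] ++ rev L).
    by move=> y; rewrite -catA rev_cat !rev_cons -!cats1 -!catA.
  have R3 : forall y, rev (L ++ y :: b :: R) = rev R ++ ([:: b; y] ++ rev L).
    by move=> y; rewrite rev_cat !rev_cons -!cats1 -!catA.
  rewrite R1; under eq_bigr => j _ do rewrite R2 R3.
  have := @lift kk ([:: b; - kk%:Z; a] ++ rev L)
           (fun j => [:: b - kk%:Z - 1 + j%:Z; a] ++ rev L)
           (fun j => [:: b; a - kk%:Z - 1 + j%:Z] ++ rev L)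
           (fun j => (-1) ^+ j) (fun j => 1)
           (base2 kk a b (rev L)) (rev R) p.
  move=> ->; congr (_ * _); apply: eq_bigr => j _; by rewrite mul1r.
- move=> ei; subst i.
  have hsz : size (drop (size ks - 2) ks) = 2%N by rewrite size_drop; lia.
  have eks := cat_take_drop (size ks - 2) ks.
  have hL : size (take (size ks - 2) ks) = (size ks - 2)%N by rewrite size_takel //; lia.
  move: eks hL hsz.
  case: (drop (size ks - 2) ks) => [|a [|x [|b R]]] //= eks hL _.
  move: (take (size ks - 2) ks) eks hL => L eks hL; subst ks.
  rewrite size_cat /= in hk *.
  rewrite (_ : (size L + 2 - 2 = size L)%N) in hk * ; last by lia.
  rewrite (_ : ((size L + 2).-1 = (size L + 1))%N) in hk * ; last by lia.
  rewrite nthc /= in hk; subst x.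
  rewrite addn1 take1 nth0c.
  apply: Aeq_eq => p; rewrite /zetaA /zeta_p.
  have R1 : rev (L ++ [:: a; - kk%:Z]) = [:: - kk%:Z, a & rev L].
    by rewrite rev_cat.
  have R2 : forall y, rev (L ++ [:: y]) = y :: rev L.
    by move=> y; rewrite rev_cat.
  rewrite R1; under eq_bigr => j _ do rewrite !R2.
  rewrite inner; congr (_ * _); apply: eq_bigr => j _; ring.
Qed.
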